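(* Every nonempty, acyclic and connected extended representation graph for $E$ that does not contain a source is isomorphic to $(F_x,\phi_x)$ for some $x\in X^\infty$.
   Context: $E=(E^0,E^1,s,r)$ is a row-finite directed graph; for each vertex $v$ emitting an edge a fixed edge $e^v\in s^{-1}(v)$ is called special, others nonspecial. The double graph $E_d$ has vertices $E^0$ and edges $e$ (real) and $e^*$ (ghost) for $e\in E^1$, with $s_d(e)=s(e),r_d(e)=r(e),s_d(e^* )=r(e),r_d(e^* )=s(e)$. For a path $p=e_1\dots e_n$ set $p^*=e_n^*\dots e_1^*$. The set $X$ of (finite) basis paths consists of the paths in $E_d$: vertices; $p,p^*$ for paths $p$ of length $\ge1$ in $E$; $pq^*$ with $p=e_1\dots e_k,q=f_1\dots f_n$ of length $\ge1$ in $E$, $r(p)=r(q)$, and $e_k\ne f_n$ or $e_k=f_n$ nonspecial. $X^\infty$ is the set of left-infinite words $x=\dots x_3x_2x_1$ of edges of $E_d$ such that each $x_n\dots x_1$ is a basis path. An extended representation graph for $E$ is a pair $(F,\phi)$, $F$ a directed graph, $\phi:F\to E_d$ a graph homomorphism, such that for every $w\in F^0$: (i) $w$ is a source or receives exactly one edge $f_w$; (ii) if $w$ is a source or $\phi(f_w)$ is a nonspecial real edge, $\phi$ maps $s^{-1}(w)$ bijectively onto $s_d^{-1}(\phi(w))$; (iii) if $\phi(f_w)$ is a special real edge, onto $s_d^{-1}(\phi(w))\setminus\{\phi(f_w)^*\}$; (iv) if $\phi(f_w)$ is a ghost edge, onto the ghost edges in $s_d^{-1}(\phi(w))$. An isomorphism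 $(F,\phi)\to(G,\psi)$ is a graph isomorphism $\alpha$ with $\psi\circ\alpha=\phi$. $F$ is connected if any two vertices are joined by a path when edge directions are ignored; acyclic if it has no cycle; nonempty if $F^0\neq\emptyset$. $(F_x,\phi_x)$ for $x=\dots x_2x_1\in X^\infty$: for $i\in\mathbb N$, $X_i$ = basis paths $y=y_1\dots y_n$, $n\ge1$, with $x_iy_1$ a basis path and $y_1\ne x_{i-1}$ if $i\ge2$. Vertices $w_i$ ($i\in\mathbb N$), $w_{i,y}$ ($y\in X_i$), all distinct; edges $f_i$ from $w_{i+1}$ to $w_i$, and $f_{i,y}$ to $w_{i,y}$ from $w_i$ if $|y|=1$, from $w_{i,y_1\dots y_{n-1}}$ if $n\ge2$; $\phi_x(w_i)=r_d(x_i)$, $\phi_x(w_{i,y})=r_d(y)$, $\phi_x(f_i)=x_i$, $\phi_x(f_{i,y})=$ last edge of $y$. *)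

(* Defs.v *)
From Stdlib Require Import Relations List.
From mathcomp Require Import all_boot.
Set Implicit Arguments. Unset Strict Implicit. Unset Printing Implicit Defensive.

(* A row-finite directed graph E = (E^0, E^1, s, r) together with the choice of
   a special edge e^v in s^{-1}(v) for every vertex v emitting an edge. *)
Record rfgraph := RFGraph {
  vert : Type;
  edge : Type;
  src : edge -> vert;
  rng : edge -> vert;
  row_finite : forall v, exists l : seq edge, forall e, src e = v -> Stdlib.Lists.List.In e l;
  spc : vert -> option edge;
  spc_src : forall v e, spc v = Some e -> src e = v;
  spc_emit : forall e, spc (src e) <> None }.

Definition special (E : rfgraph) (e : edge E) : Prop := spc (src e) = Some e.

Inductive dedge (E : rfgraph) := Real of edge E | Ghost of edge E.
Arguments Real {E}. Arguments Ghost {E}.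

Definition sd (E : rfgraph) (d : dedge E) : vert E :=
  match d with Real e => src e | Ghost e => rng e end.
Definition rd (E : rfgraph) (d : dedge E) : vert E :=
  match d with Real e => rng e | Ghost e => src e end.

Fixpoint dpath (E : rfgraph) (w : seq (dedge E)) : Prop :=
  match w with
  | a :: ((b :: _) as t) => rd a = sd b /\ dpath t
  | _ => True
  end.

(* Basis paths of length >= 1: p, q^*, or p q^* with the special-edge condition.
   p = e_1..e_k is encoded as map Real p, q = f_1..f_n gives q^* = rev (map Ghost q). *)
Definition basis_word (E : rfgraph) (w : seq (dedge E)) : Prop :=
  w <> [::] /\ dpath w /\
  exists p q : seq (edge E),
    w = map Real p ++ rev (map Ghost q) /\
    forall p' e q' f, p = rcons p' e -> q = rcons q' f ->
      e <> f \/ (e = f /\ ~ special e).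

(* x : nat -> dedge E encodes the left-infinite word ... x_3 x_2 x_1 with
   x_{k+1} = x k. *)
Definition in_Xinf (E : rfgraph) (x : nat -> dedge E) : Prop :=
  forall n, 0 < n -> basis_word (rev (mkseq x n)).

(* X_i for i = k+1. *)
Definition Xi (E : rfgraph) (x : nat -> dedge E) (k : nat) (y : seq (dedge E)) : Prop :=
  basis_word y /\
  exists y1 ys, y = y1 :: ys /\ basis_word [:: x k; y1] /\ (0 < k -> y1 <> x k.-1).

Record graph := Graph { gV : Type; gE : Type; gs : gE -> gV; gr : gE -> gV }.

(* Vertices of F_x: (k, [::]) is w_{k+1}, (k, y) with y in X_{k+1} is w_{k+1,y}.
   Edges are indexed by the same set: (k, [::]) is f_{k+1}, (k, y) is f_{k+1,y}
   (the edge whose range is the vertex with the same index). *)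
Definition FVpred (E : rfgraph) (x : nat -> dedge E) (p : nat * seq (dedge E)) : Prop :=
  p.2 = [::] \/ Xi x p.1 p.2.

Definition FV (E : rfgraph) (x : nat -> dedge E) := {p : nat * seq (dedge E) | FVpred x p}.

Definition src_idx (E : rfgraph) (p : nat * seq (dedge E)) : nat * seq (dedge E) :=
  if p.2 is [::] then (p.1.+1, [::]) else (p.1, take (size p.2).-1 p.2).

Lemma dpath_rcons (E : rfgraph) (z : seq (dedge E)) a : dpath (rcons z a) -> dpath z.
Proof.
elim: z => [|b z IH] //=.
case: z IH => [|c z] IH //=.
by case=> H1 H2; split => //; apply: IH.
Qed.

Lemma basis_rcons (E : rfgraph) (z : seq (dedge E)) a :
  z <> [::] -> basis_word (rcons z a) -> basis_word z.
Proof.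
move=> nz [_ [Hp [p [q [Hw Hc]]]]].
split => //; split; first exact: dpath_rcons Hp.
clear Hp.
case: q Hw Hc => [|f q'] Hw Hc.
  case/lastP: p Hw Hc => [|p' e] Hw Hc.
    by rewrite /= in Hw; case: z nz Hw.
  exists p', [::]; split; last by move=> ? ? q'' ? _ Hq; case: q'' Hq.
  rewrite /= cats0 map_rcons in Hw; rewrite cats0.
  by move/rcons_inj: Hw => [].
exists p, q'; split.
  move: Hw; rewrite map_cons rev_cons -rcons_cat => /rcons_inj [] //.
move=> p'' e q'' f' Hp' Hq'; apply: (Hc p'' e (f :: q'') f') => //.
by rewrite Hq'.
Qed.

Lemma FV_src_ok (E : rfgraph) (x : nat -> dedge E) p : FVpred x p -> FVpred x (src_idx p).
Proof.
case: p => k y; rewrite /FVpred /src_idx /=.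
case: y => [|a t] /=; first by left.
case => // -[Hb [y1 [ys [Hy [H1 H2]]]]].
case: Hy => Ha Ht; subst y1 ys.
case/lastP: t Hb => [|t b] Hb; first by left.
right; rewrite size_rcons -rcons_cons -cats1 take_size_cat //.
split; first by apply: (basis_rcons (a := b)) => //; rewrite cats1 rcons_cons.
by exists a, t.
Qed.

Definition FE_src (E : rfgraph) (x : nat -> dedge E) (e : FV x) : FV x :=
  exist _ (src_idx (sval e)) (FV_src_ok (svalP e)).

Definition Fgraph (E : rfgraph) (x : nat -> dedge E) : graph :=
  @Graph (FV x) (FV x) (@FE_src E x) (fun e => e).

Definition phixE (E : rfgraph) (x : nat -> dedge E) (e : FV x) : dedge E :=
  match (sval e).2 with [::] => x (sval e).1 | a :: t => last a t end.
Definition phixV (E : rfgraph) (x : nat -> dedge E) (v : FV x) : vert E :=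
  rd (phixE v).

Definition onto_bij (E : rfgraph) (G : graph) (phE : gE G -> dedge E)
  (w : gV G) (T : dedge E -> Prop) : Prop :=
  (forall f1 f2, gs f1 = w -> gs f2 = w -> phE f1 = phE f2 -> f1 = f2) /\
  (forall f, gs f = w -> T (phE f)) /\
  (forall d, T d -> exists2 f, gs f = w & phE f = d).

Definition is_source (G : graph) (w : gV G) : Prop := forall f, gr f <> w.

Definition is_ext_rep (E : rfgraph) (G : graph)
  (phV : gV G -> vert E) (phE : gE G -> dedge E) : Prop :=
  (forall f, sd (phE f) = phV (gs f) /\ rd (phE f) = phV (gr f)) /\
  forall w : gV G,
    (is_source w /\ onto_bij phE w (fun d => sd d = phV w)) \/
    (exists fw, gr fw = w /\ (forall f, gr f = w -> f = fw) /\
      match phE fw with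
      | Real e =>
          (~ special e -> onto_bij phE w (fun d => sd d = phV w)) /\
          (special e -> onto_bij phE w (fun d => sd d = phV w /\ d <> Ghost e))
      | Ghost _ =>
          onto_bij phE w (fun d => sd d = phV w /\ exists e, d = Ghost e)
      end).

Fixpoint gpath (G : graph) (f : gE G) (fs : seq (gE G)) : Prop :=
  match fs with [::] => True | g :: gs' => gr f = gs g /\ gpath g gs' end.

Definition acyclic (G : graph) : Prop :=
  ~ exists (f : gE G) (fs : seq (gE G)), gpath f fs /\ gr (last f fs) = gs f.

Definition gadj (G : graph) (u v : gV G) : Prop := exists f, gs f = u /\ gr f = v.

Definition connected (G : graph) : Prop :=
  forall u v : gV G, clos_refl_sym_trans (gV G) (@gadj G) u v.

Definition no_source (G : graph) : Prop := forall w : gV G, ~ is_source w.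

Definition erg_iso (E : rfgraph) (G1 : graph) (phV1 : gV G1 -> vert E) (phE1 : gE G1 -> dedge E)
  (G2 : graph) (phV2 : gV G2 -> vert E) (phE2 : gE G2 -> dedge E) : Prop :=
  exists (aV : gV G1 -> gV G2) (aE : gE G1 -> gE G2),
    bijective aV /\ bijective aE /\
    (forall f, gs (aE f) = aV (gs f)) /\ (forall f, gr (aE f) = aV (gr f)) /\
    (forall v, phV2 (aV v) = phV1 v) /\ (forall f, phE2 (aE f) = phE1 f).

(* Main.v *)
Require Import Defs.
From mathcomp Require Import all_boot.
From Stdlib Require Import Classical ClassicalEpsilon ProofIrrelevance Relations.
Set Implicit Arguments. Unset Strict Implicit. Unset Printing Implicit Defensive.

Section BW.
Variable E : rfgraph.

Definition okp (a b : dedge E) : Prop :=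
  rd a = sd b /\
  match a, b with
  | Ghost _, Real _ => False
  | Real e, Ghost f => e <> f \/ ~ special e
  | _, _ => True
  end.

Fixpoint lchain (w : seq (dedge E)) : Prop :=
  match w with
  | a :: ((b :: _) as t) => okp a b /\ lchain t
  | _ => True
  end.

Lemma rcons_nn (T : Type) (s : seq T) x : rcons s x <> [::].
Proof. by case: s. Qed.

Lemma bw1 (a : dedge E) : basis_word [:: a].
Proof.
split => //; split => //.
case: a => e.
  exists [:: e], [::]; split => // p' e' q' f _ Hq; by case: q' Hq.
exists [::], [:: e]; split => // p' e' q' f Hp; by case: p' Hp.
Qed.

Lemma bw2 a b t : basis_word [:: a, b & t] <-> okp a b /\ basis_word (b :: t).
Proof.
split.
- move=> [_ [[Hr Hp] [p [q [Hw Hc]]]]].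
  case: p Hw Hc => [|e p'] Hw Hc.
  + case/lastP: q Hw Hc => [|q' f] Hw Hc; first by [].
    rewrite map_rcons rev_rcons /= in Hw; case: Hw => Ha Hw; subst a.
    case/lastP: q' Hw Hc => [|q'' g] Hw Hc; first by [].
    rewrite map_rcons rev_rcons in Hw; case: Hw => Hb Ht; subst b.
    split; first by split.
    split => //; split => //.
    exists [::], (rcons q'' g); split; first by rewrite map_rcons rev_rcons Ht.
    by move=> p0 ? ? ? Hp0; case: p0 Hp0.
  + rewrite /= in Hw; case: Hw => Ha Hw; subst a.
    split.
      split => //.
      case: b Hw Hr Hp => f Hw Hr Hp //.
      case: p' Hw Hc => [|e1 p1] Hw Hc; last by [].
      case/lastP: q Hw Hc => [|q' f'] Hw Hc; first by [].
      rewrite /= map_rcons rev_rcons in Hw; case: Hw => Hf _; subst f'.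
      have [|[_ ?]] := Hc [::] e q' f erefl erefl; by [left|right].
    split => //; split => //.
    exists p', q; split => // p0 e0 q0 f0 Hp0 Hq0.
    by apply: (Hc (e :: p0) e0 q0 f0) => //; rewrite Hp0.
- move=> [[Hr Hm] [_ [Hp [p [q [Hw Hc]]]]]].
  split => //; split; first by split.
  case: a Hr Hm => e Hr Hm.
  + exists (e :: p), q; split; first by rewrite /= Hw.
    move=> p0 e0 q0 f0 Hp0 Hq0.
    case: p Hw Hc Hp0 => [|e1 p1] Hw Hc Hp0.
    * case: p0 Hp0 => [|e2 p2] /=; last by case: p2.
      case=> ?; subst e0.
      subst q; rewrite /= map_rcons rev_rcons in Hw; case: Hw => Hb _; subst b.
      case: Hm => Hm; first by left.
      case: (classic (e = f0)) => H; [right|left] => //.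
    * case: p0 Hp0 => [|e2 p2] /=; first by case.
      case=> ? Hp0; subst e2.
      exact: (Hc p2 e0 q0 f0).
  + case: b Hw Hm Hp Hr => f Hw Hm Hp Hr //.
    exists [::], (rcons q e); split.
      case: p Hw Hc => [|e1 p1] Hw Hc; last by [].
      by rewrite /= map_rcons rev_rcons /= Hw.
    by move=> p0 ? ? ? Hp0; case: p0 Hp0.
Qed.

Lemma bw_chain w : basis_word w <-> w <> [::] /\ lchain w.
Proof.
elim: w => [|a t IH]; first by split; [case | case].
case: t IH => [|b t] IH; first by split => // _; exact: bw1.
rewrite bw2 IH /=; split.
  by move=> [H1 [_ H2]].
by move=> [_ [H1 H2]].
Qed.

Lemma lchain_rcons a s d : lchain (rcons (a :: s) d) <-> lchain (a :: s) /\ okp (last a s) d.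
Proof.
elim: s a => [|b s IH] a /=; first by split; [case|case].
change (okp a b /\ lchain (rcons (b::s) d) <-> (okp a b /\ lchain (b::s)) /\ okp (last b s) d).
rewrite IH; split; [by case=> ? [] | by case=> [[? ?] ?]].
Qed.

Lemma lchain_tl a s : lchain (a :: s) -> lchain s.
Proof. by case: s => [|b s] //= []. Qed.

End BW.

Section GR.
Variables (E : rfgraph) (G : graph) (phV : gV G -> vert E) (phE : gE G -> dedge E).
Hypothesis Hrep : is_ext_rep phV phE.
Hypothesis Hns : no_source G.

Lemma onto_ext w (T T' : dedge E -> Prop) :
  (forall d, T d <-> T' d) -> onto_bij phE w T -> onto_bij phE w T'.
Proof.
move=> HT [H1 [H2 H3]]; split => //; split.
  by move=> f Hf; apply/HT; apply: H2.
by move=> d /HT; apply: H3.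
Qed.

Lemma in_ex w : exists fw, gr fw = w /\ (forall f, gr f = w -> f = fw) /\
  onto_bij phE w (okp (phE fw)).
Proof.
case: Hrep => H1 H2.
case: (H2 w) => [[Hs _]|[fw [Hr [Hu Hm]]]]; first by case: (Hns Hs).
exists fw; split => //; split => //.
have Hph : phV w = rd (phE fw) by rewrite (proj2 (H1 fw)) Hr.
move: Hm Hph; case: (phE fw) => e Hm Hph.
- case: (classic (special e)) => Hs.
  + apply: onto_ext (proj2 Hm Hs) => d; rewrite /okp Hph.
    case: d => f /=; split.
    * by case=> ->.
    * by case=> ->.
    * case=> -> Hne; split => //; left => Hef; apply: Hne; by rewrite Hef.
    * case=> -> [Hne|Hne] //; split => // [[Hef]]; exact: Hne.
  + apply: onto_ext (proj1 Hm Hs) => d; rewrite /okp Hph.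
    case: d => f /=; split.
    * by move->.
    * by case.
    * by move->; split => //; right.
    * by case.
- apply: onto_ext Hm => d; rewrite /okp Hph.
  case: d => f /=; split.
  * by case=> _ [].
  * by case.
  * by case=> ->.
  * by case=> -> _; split => //; exists f.
Qed.

Definition inE w := proj1_sig (constructive_indefinite_description _ (in_ex w)).

Lemma inE_r w : gr (inE w) = w.
Proof. by have [] := proj2_sig (constructive_indefinite_description _ (in_ex w)). Qed.

Lemma inE_u w f : gr f = w -> f = inE w.
Proof. by have [_ []] := proj2_sig (constructive_indefinite_description _ (in_ex w)); auto. Qed.

Lemma inE_b w : onto_bij phE w (okp (phE (inE w))).
Proof. by have [_ []] := proj2_sig (constructive_indefinite_description _ (in_ex w)). Qed.

Lemma inE_gr f : inE (gr f) = f.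
Proof. by rewrite -(inE_u (erefl (gr f))). Qed.

Lemma out_ok f : okp (phE (inE (gs f))) (phE f).
Proof. by have [_ [H _]] := inE_b (gs f); apply: H. Qed.

Lemma out_ex w d : okp (phE (inE w)) d -> exists2 f, gs f = w & phE f = d.
Proof. by have [_ [_ H]] := inE_b w; apply: H. Qed.

Lemma out_inj f1 f2 : gs f1 = gs f2 -> phE f1 = phE f2 -> f1 = f2.
Proof. by move=> H; have [H1 _] := inE_b (gs f2); apply: H1. Qed.

Definition par v := gs (inE v).

Definition childE w d := epsilon (inhabits (inE w)) (fun f => gs f = w /\ phE f = d).

Lemma childE_spec w d : okp (phE (inE w)) d -> gs (childE w d) = w /\ phE (childE w d) = d.
Proof.
move=> /out_ex [f H1 H2].
by apply: (epsilon_spec (inhabits (inE w)) (fun f => gs f = w /\ phE f = d)); exists f.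
Qed.

Fixpoint walk v (y : seq (dedge E)) :=
  match y with [::] => v | d :: t => walk (gr (childE v d)) t end.

Lemma walk_spec y v : lchain (phE (inE v) :: y) ->
  phE (inE (walk v y)) = last (phE (inE v)) y.
Proof.
elim: y v => [|d t IH] v //= [Hok Hc].
have [Hs Hp] := childE_spec Hok.
rewrite IH inE_gr Hp //.
Qed.

Lemma walk_rcons v y d : walk v (rcons y d) = gr (childE (walk v y) d).
Proof. by elim: y v => [|b y IH] v //=. Qed.

Hypothesis Hac : acyclic G.
Hypothesis Hconn : connected G.
Variable w0 : gV G.

Definition wk n := iter n par w0.
Definition xx k := phE (inE (wk k)).
Local Notation fsrc := (@FE_src E xx).

Lemma wkS n : wk n.+1 = par (wk n).
Proof. by rewrite /wk iterS. Qed.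

Lemma xx_ok n : okp (xx n.+1) (xx n).
Proof. rewrite /xx wkS; exact: out_ok. Qed.

Lemma x_in : in_Xinf xx.
Proof.
case=> // n _; elim: n => [|n IH]; first exact: bw1.
rewrite mkseqS rev_rcons mkseqS rev_rcons; rewrite mkseqS rev_rcons in IH.
apply/bw2; split => //; exact: xx_ok.
Qed.

Lemma wk_path n m : exists f fs, gpath f fs /\ gs f = wk (m + n).+1 /\ gr (last f fs) = wk m.
Proof.
elim: n => [|n [f [fs [Hp [Hs Hl]]]]].
  exists (inE (wk m)), [::]; split => //; split; [by rewrite addn0 wkS | exact: inE_r].
exists (inE (wk (m + n).+1)), (f :: fs); split => /=.
  by split => //; rewrite inE_r Hs.
by split => //; rewrite addnS wkS.
Qed.

Lemma wk_lt i j : i < j -> wk i <> wk j.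
Proof.
move=> Hij Heq.
have [f [fs [Hp [Hs Hl]]]] := wk_path (j - i.+1) i.
rewrite -addSn subnKC // in Hs.
apply: Hac; exists f, fs; split => //; by rewrite Hl Hs.
Qed.

Lemma wk_inj i j : wk i = wk j -> i = j.
Proof.
move=> H; case: (ltngtP i j) => // Hij.
  by case: (wk_lt Hij H).
by case: (wk_lt Hij (esym H)).
Qed.

Definition aVf (p : nat * seq (dedge E)) := walk (wk p.1) p.2.
Definition aV (a : FV xx) := aVf (sval a).

Lemma FV_eq (a b : FV xx) : sval a = sval b -> a = b.
Proof. case: a b => [p Hp] [q Hq] /= H; subst q; f_equal; apply: proof_irrelevance. Qed.

Lemma memb_chain p : FVpred xx p -> lchain (xx p.1 :: p.2).
Proof.
case: p => k y; case => /= [-> //| [Hb [y1 [ys [Hy [H1 _]]]]]]; subst y.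
have [_ Hc] := (bw_chain _).1 Hb.
have [_ Hc1] := (bw_chain _).1 H1.
by split => //; case: Hc1.
Qed.

Lemma phix_last (a : FV xx) : phixE a = last (xx (sval a).1) (sval a).2.
Proof. by rewrite /phixE; case: (sval a).2. Qed.

Lemma label (a : FV xx) : phE (inE (aV a)) = phixE a.
Proof.
rewrite phix_last /aV /aVf walk_spec //.
exact: (memb_chain (svalP a)).
Qed.

Lemma src_rcons k (z : seq (dedge E)) d : src_idx (k, rcons z d) = (k, z).
Proof.
rewrite /src_idx /=.
case Hr: (rcons z d) => [|a t]; first by case: z Hr.
by rewrite -Hr size_rcons /= -cats1 take_size_cat.
Qed.

Lemma par_comm (a : FV xx) : par (aV a) = aV (fsrc a).
Proof.
case: a => [[k y] Ha]; rewrite /aV /FE_src /=.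
case/lastP: y Ha => [|z d] Ha; first by rewrite /aVf /= ?wkS.
rewrite src_rcons /aVf /= walk_rcons /par inE_gr.
have : lchain (rcons (xx k :: z) d) by exact: (memb_chain Ha).
move=> /lchain_rcons [H1 H2].
have Hok : okp (phE (inE (walk (wk k) z))) d by rewrite walk_spec.
by have [-> _] := childE_spec Hok.
Qed.

Lemma aV_iter n a : iter n par (aV a) = aV (iter n fsrc a).
Proof. by elim: n => [|n IH] //; rewrite !iterS IH par_comm. Qed.

Lemma iter_sz y : forall (a : FV xx) k, sval a = (k, y) -> sval (iter (size y) fsrc a) = (k, [::]).
Proof.
elim/last_ind: y => [|z d IH] a k Ha; first by [].
rewrite size_rcons iterSr; apply: IH.
by rewrite /FE_src /= Ha src_rcons.
Qed.

Lemma iter_size n (a : FV xx) k y : sval a = (k, y) ->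
  sval (iter (n + size y) fsrc a) = (k + n, [::]).
Proof.
move=> Ha; rewrite iterD.
elim: n => [|n IH]; first by rewrite addn0 /= (iter_sz Ha).
by rewrite iterS /FE_src /= IH /src_idx /= addnS.
Qed.

Lemma child_inj (a b : FV xx) : fsrc a = fsrc b -> phixE a = phixE b -> a = b.
Proof.
move=> H1 H2; apply: FV_eq.
move/(f_equal sval): H1; rewrite !phix_last /= in H2 *.
case: a b H2 => [[k y] Ha] [[k' y'] Hb] /= H2.
case/lastP: y Ha H2 => [|z d] Ha H2; case/lastP: y' Hb H2 => [|z' d'] Hb H2.
- by rewrite /src_idx /=; case=> ->.
- rewrite src_rcons /src_idx /=; rewrite last_rcons /= in H2; case=> Hk Hz; subst k' z'.
  case: Hb => /= [//|[_ [y1 [ys [[Hy1 _] [_ Hne]]]]]]; subst y1.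
  by case: (Hne erefl (esym H2)).
- rewrite src_rcons /src_idx /=; rewrite last_rcons /= in H2; case=> Hk Hz; subst k z.
  case: Ha => /= [//|[_ [y1 [ys [[Hy1 _] [_ Hne]]]]]]; subst y1.
  by case: (Hne erefl H2).
- rewrite !src_rcons !last_rcons in H2 *; case=> -> ->; by rewrite H2.
Qed.

Lemma desc n : forall a b : FV xx, iter n fsrc a = iter n fsrc b -> aV a = aV b -> a = b.
Proof.
elim: n => [|n IH] a b //.
rewrite !iterSr => Hi Hab.
have Hp : fsrc a = fsrc b by apply: IH => //; rewrite -!par_comm Hab.
by apply: child_inj => //; rewrite -!label Hab.
Qed.

Lemma FV_inj (a b : FV xx) : aV a = aV b -> a = b.
Proof.
move=> Hab; case Ha: (sval a) => [k y]; case Hb: (sval b) => [k' y'].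
have Ia := iter_size (size y') Ha.
have Ib := iter_size (size y) Hb.
rewrite addnC in Ib.
apply: (desc (n := size y' + size y)) => //.
apply: FV_eq; rewrite Ia Ib.
have : aV (iter (size y' + size y) fsrc a) = aV (iter (size y' + size y) fsrc b).
  by rewrite -!aV_iter Hab.
by rewrite /aV Ia Ib /aVf /= => /wk_inj ->.
Qed.

Definition a0 : FV xx := exist _ (0, [::]) (or_introl erefl).

Lemma img_step (a : FV xx) f : aV a = gs f -> exists b, aV b = gr f.
Proof.
case: a => [[k y] Ha] Hu.
rewrite /aV /= in Hu.
have Hl := label (exist _ (k, y) Ha); rewrite phix_last /aV /= Hu in Hl.
have Hok := out_ok f; rewrite Hl /= in Hok.
case: (classic (y = [::] /\ 0 < k /\ phE f = xx k.-1)) => [[Hy [Hk Hf]]|Hn].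
  subst y; exists (exist _ (k.-1, [::]) (or_introl erefl)); rewrite /aV /aVf /=.
  have Hs : gs (inE (wk k.-1)) = gs f by rewrite -Hu /aVf /= -[in wk k](prednK Hk) wkS.
  by rewrite -(out_inj Hs) ?inE_r.
have Hc := memb_chain Ha; rewrite /= in Hc.
have HC : lchain (xx k :: rcons y (phE f)) by rewrite -rcons_cons; apply/lchain_rcons.
have HP : FVpred xx (k, rcons y (phE f)).
  right; split; first by apply/bw_chain; split; [exact: rcons_nn | exact: lchain_tl HC].
  case: y Ha Hn Hc HC Hok Hu Hl => [|y1 ys] Ha Hn Hc HC Hok Hu Hl.
    exists (phE f), [::]; split => //; split; first by apply/bw_chain; split.
    by move=> Hk Hf; apply: Hn.
  case: Ha => [//|[_ [y2 [ys' [Hy [H1 H2]]]]]]; case: Hy => ? ?; subst y2 ys'.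
  by exists y1, (rcons ys (phE f)).
exists (exist _ _ HP); rewrite /aV /aVf /= walk_rcons.
move: Hu; rewrite /aVf /= => Hu.
have Hok' : okp (phE (inE (walk (wk k) y))) (phE f) by rewrite Hu; apply: out_ok.
have [Hs Hp] := childE_spec Hok'.
by rewrite (out_inj (f1 := childE _ _) (f2 := f)) // Hs Hu.
Qed.

Lemma img u : exists a, aV a = u.
Proof.
suff H : forall u v, clos_refl_sym_trans (gV G) (@gadj G) u v ->
  ((exists a, aV a = u) <-> (exists a, aV a = v)).
  by apply/(H u w0 (Hconn u w0)); exists a0.
move=> {}u v; elim => {u v}.
- move=> u v [f [Hs Hr]]; split; move=> [a Ha].
    by subst u v; apply: (img_step Ha).
  exists (fsrc a); rewrite -par_comm Ha /par -Hr inE_gr //.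
- by move=> x0.
- by move=> x0 y0 _ H; split; move/H.
- by move=> x0 y0 z0 _ H1 _ H2; rewrite H1.
Qed.

End GR.

Lemma bij_of (A B : Type) (f : A -> B) (a0 : A) :
  injective f -> (forall b, exists a, f a = b) -> bijective f.
Proof.
move=> Hi Hs.
exists (fun b => epsilon (inhabits a0) (fun a => f a = b)).
  move=> a; apply: Hi.
  by apply: (epsilon_spec (inhabits a0) (fun a' => f a' = f a)); exists a.
move=> b; by apply: (epsilon_spec (inhabits a0) (fun a' => f a' = b)).
Qed.

Theorem proposition5p11 (E : rfgraph) (G : graph)
  (phV : gV G -> vert E) (phE : gE G -> dedge E) :
  is_ext_rep phV phE -> inhabited (gV G) -> acyclic G -> connected G -> no_source G ->
  exists x : nat -> dedge E, in_Xinf x /\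
    @erg_iso E G phV phE (Fgraph x) (@phixV E x) (@phixE E x).
Proof.
move=> Hrep [w0] Hac Hconn Hns.
exists (xx Hrep Hns w0); split; first exact: (x_in Hrep Hns w0).
set aa := @aV _ _ _ _ Hrep Hns w0.
pose a00 : FV (xx Hrep Hns w0) := exist _ (0, [::]) (or_introl erefl).
have Hinj : injective aa by move=> a b; apply: (FV_inj Hac).
have Hsur : forall u, exists a, aa a = u by move=> u; apply: (img Hrep Hns Hconn w0).
have [g Hg1 Hg2] := bij_of a00 Hinj Hsur.
exists g, (fun e => g (gr e)).
split; first by exists aa.
split.
  exists (fun a => inE Hrep Hns (aa a)).
    by move=> e /=; rewrite Hg2 inE_gr.
  by move=> a /=; rewrite inE_r Hg1.
split.
  move=> f; apply: Hinj => /=.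
  by rewrite /aa -par_comm -/aa Hg2 /par inE_gr Hg2.
split; first by [].
split.
  move=> v; rewrite /phixV -(label (g v)) -/aa Hg2.
  by rewrite (proj2 ((proj1 Hrep) _)) inE_r.
by move=> f; rewrite -(label (g (gr f))) -/aa Hg2 inE_gr.
Qed.
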